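(* Let $V$ be the complex vector space with basis the Schröder pseudocompositions. For Schröder pseudocompositions $I$ and $J$, write $J=J'0^m$ where $m\ge1$ and $J'$ does not end with $0$, and define $$I\prec J=J'0^{m-1}\cdot I,\qquad I\circ J=(J'\triangleright I)\cdot 0^{m-1},\qquad I\succ J=J'\cdot I\cdot 0^{m-1},$$ extended bilinearly to $V$. Then $(V,\prec,\circ,\succ)$ is a triduplicial algebra, and it is freely generated (as a triduplicial algebra) by the element $x=(1,0,0)$.
   Context: A reduced plane tree is a rooted plane tree in which every internal vertex has at least two children. Its Polish code is the sequence obtained by listing the vertices in preorder (root, then the children's subtrees from left to right, recursively), recording $0$ for a leaf and $k$ for an internal vertex with $k+1$ children. A Schröder pseudocomposition is the Polish code of a reduced plane tree with at least two leaves (such a code always ends with $0$). Here $\cdot$ denotes concatenation of sequences, $0^k$ is the sequence of $k$ zeros, and for $J'=(j_1,\dots,j_s)$, $I=(i_1,\dots,i_r)$, $J'\triangleright I=(j_1,\dots,j_{s-1},j_s+i_1,i_2,\dots,i_r)$. A triduplicial algebra is a vector space with three bilinear operations $\prec,\circ,\succ$ satisfying: $(x\prec y)\prec z=x\prec(y\prec z)$, $(x\circ y)\circ z=x\circ(y\circ z)$, $(x\succ y)\succ z=x\succ(y\succ z)$, $(x\succ y)\prec z=x\succ(y\prec z)$, $(x\circ y)\prec z=x\circ(y\prec z)$, $(x\succ y)\circ z=x\succ(y\circ z)$, $(x\circ y)\succ z=x\circ(y\succ z)$. It is freely generated by $x$ if for every triduplicial algebra $W$ and every $w\in W$ there is a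 unique morphism of triduplicial algebras $V\to W$ sending $x$ to $w$. *)

(* Defs.v *)
From HB Require Import structures.
From mathcomp Require Import all_boot all_algebra.
From mathcomp Require Import boolp Rstruct.
From mathcomp.real_closed Require Import complex.
From mathcomp Require Import finmap monalg.

Set Implicit Arguments.
Unset Strict Implicit.
Unset Printing Implicit Defensive.
Import GRing.Theory.
Local Open Scope ring_scope.

Definition CC : fieldType := complex Rdefinitions.R.

Inductive ptree := Leaf | Node of seq ptree.

Fixpoint reduced (t : ptree) : bool :=
  match t with
  | Leaf => true
  | Node ts => (1 < size ts)%N && all reduced ts
  end.

Fixpoint nleaves (t : ptree) : nat :=
  match t with
  | Leaf => 1%N
  | Node ts => sumn (map nleaves ts)
  end.

Fixpoint polish (t : ptree) : seq nat :=
  match t with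
  | Leaf => [:: 0%N]
  | Node ts => (size ts).-1 :: flatten (map polish ts)
  end.

Definition pseudocomp (s : seq nat) : Prop :=
  exists t, reduced t /\ (2 <= nleaves t)%N /\ polish t = s.

Definition is_pc (s : seq nat) : bool := `[< pseudocomp s >].

Definition PC := {s : seq nat | is_pc s}.

(* number m of trailing zeros, and J' with J = J' 0^m *)
Definition tzeros (J : seq nat) : nat := find (fun a => a != 0%N) (rev J).
Definition tprefix (J : seq nat) : seq nat := take (size J - tzeros J) J.

Definition tri (J' I : seq nat) : seq nat :=
  take (size J').-1 J' ++ (last 0%N J' + head 0%N I)%N :: behead I.

Definition prec_seq (I J : seq nat) : seq nat :=
  tprefix J ++ nseq (tzeros J).-1 0%N ++ I.
Definition circ_seq (I J : seq nat) : seq nat :=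
  tri (tprefix J) I ++ nseq (tzeros J).-1 0%N.
Definition succ_seq (I J : seq nat) : seq nat :=
  tprefix J ++ I ++ nseq (tzeros J).-1 0%N.

Definition V : lmodType CC := {malg CC[PC]}.

(* basis vector of a sequence (0 if it is not a pseudocomposition, which
   never happens for the sequences produced by the operations below) *)
Definition bvec (s : seq nat) : V :=
  if insub s is Some k then << (k : PC) >> else 0.

Definition bilin_ext (op : seq nat -> seq nat -> seq nat) (f g : V) : V :=
  \sum_(i <- msupp f) \sum_(j <- msupp g)
     (f@_i * g@_j) *: bvec (op (val i) (val j)).

Definition Vprec : V -> V -> V := bilin_ext prec_seq.
Definition Vcirc : V -> V -> V := bilin_ext circ_seq.
Definition Vsucc : V -> V -> V := bilin_ext succ_seq.

Definition xgen : V := bvec [:: 1%N; 0%N; 0%N].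

Definition bilinear_op (W : lmodType CC) (op : W -> W -> W) : Prop :=
  (forall (a : CC) (x x' y : W), op (a *: x + x') y = a *: op x y + op x' y) /\
  (forall (a : CC) (x y y' : W), op x (a *: y + y') = a *: op x y + op x y').

Definition triduplicial (W : lmodType CC) (l c r : W -> W -> W) : Prop :=
  bilinear_op l /\ bilinear_op c /\ bilinear_op r /\
  (forall x y z, l (l x y) z = l x (l y z)) /\
  (forall x y z, c (c x y) z = c x (c y z)) /\
  (forall x y z, r (r x y) z = r x (r y z)) /\
  (forall x y z, l (r x y) z = r x (l y z)) /\
  (forall x y z, l (c x y) z = c x (l y z)) /\
  (forall x y z, c (r x y) z = r x (c y z)) /\
  (forall x y z, r (c x y) z = c x (r y z)).

Definition tri_morph (U W : lmodType CC) (l c r : U -> U -> U)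
    (l' c' r' : W -> W -> W) (f : U -> W) : Prop :=
  [/\ forall (a : CC) (u v : U), f (a *: u + v) = a *: f u + f v,
      forall u v, f (l u v) = l' (f u) (f v),
      forall u v, f (c u v) = c' (f u) (f v) &
      forall u v, f (r u v) = r' (f u) (f v)].

(* Main.v *)
Require Import Defs.
From HB Require Import structures.
From mathcomp Require Import all_boot all_algebra.
From mathcomp Require Import boolp Rstruct.
From mathcomp.real_closed Require Import complex.
From mathcomp Require Import finmap monalg.
From mathcomp Require Import zify.

Set Implicit Arguments.
Unset Strict Implicit.
Unset Printing Implicit Defensive.


Fixpoint walk (k : nat) (s : seq nat) : option nat :=
  match s with
  | [::] => Some k
  | a :: s' => if k == 0 then None else walk (if a == 0 then k.-1 else k + a) s'
  end.

Lemma walk_cat k s t : walk k (s ++ t) = obind (walk^~ t) (walk k s).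
Proof. by elim: s k => [|a s IH] k //=; case: (k == 0). Qed.

Lemma walk_shift s k k' d : walk k s = Some k' -> walk (k + d) s = Some (k' + d).
Proof.
elim: s k => [|a s IH] k /=; first by case=> ->.
case: k => [|k] //= H; rewrite addSn /=.
case: eqP H => _ H; first exact: IH.
have -> : (k + d).+1 + a = k.+1 + a + d by lia.
exact: IH.
Qed.

Fixpoint spl (k : nat) (s : seq nat) : seq nat * seq nat :=
  if k is 0 then ([::], s) else
  match s with
  | [::] => ([::], [::])
  | a :: s' => let p := spl (if a == 0 then k.-1 else k + a) s' in (a :: p.1, p.2)
  end.

Lemma spl0 s : spl 0 s = ([::], s). Proof. by case: s. Qed.

Lemma spl_cat n x y : walk n x = Some 0 -> spl n (x ++ y) = (x, y).
Proof.
elim: x n => [|a x IH] n /=.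
  by case=> ->; rewrite spl0.
case: n => [|n] //= H.
by rewrite IH.
Qed.

Lemma walk_split n m s : walk (n + m) s = Some 0 ->
  [/\ s = (spl n s).1 ++ (spl n s).2, walk n (spl n s).1 = Some 0 &
      walk m (spl n s).2 = Some 0].
Proof.
elim: s n => [|a s IH] n /=.
  by case=> /eqP; rewrite addn_eq0 => /andP[/eqP -> /eqP ->].
case: n => [|n] /=; first by rewrite add0n => ->.
set n' := (if a == 0 then n else n.+1 + a).
have -> : (if a == 0 then n + m else n.+1 + m + a) = n' + m.
  by rewrite /n'; case: (a == 0) => //; lia.
by case/IH => {1}<- -> ->.
Qed.

Lemma walk_nseq0 k n : walk k (nseq n 0) = if n <= k then Some (k - n) else None.
Proof.
elim: n k => [|n IH] k /=; first by rewrite subn0.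
case: k => [|k] //=; rewrite IH; by case: ifP.
Qed.

Lemma walk_code0 s : walk 1 s = Some 0 -> s = [:: 0] \/ head 0 s != 0.
Proof.
case: s => [|a s] //=; case: eqP => [-> |_] /=; last by right.
by case: s => //; left.
Qed.

Lemma walk_last k s : walk k s = Some 0 -> s = [::] \/ last 0 s = 0.
Proof.
elim: s k => [|a s IH] k /=; first by left.
case: k => [|k] //=; right.
case: s IH H => [|b s] IH /=.
  by case: eqP => [-> //|_] [] /eqP; rewrite addn_eq0 andFb.
by case/IH.
Qed.

Lemma decomp s : has (fun a => a != 0) s ->
  exists P m, s = P ++ nseq m 0 /\ last 0 P != 0.
Proof.
elim/last_ind: s => [|s a IH] //.
rewrite -cats1 has_cat /= orbF.
case: (eqVneq a 0) => [->|Ha] /=.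
  rewrite orbF => /IH [P [m [-> HP]]].
  by exists P, m.+1; rewrite -catA -addn1 nseqD.
by move=> _; exists (s ++ [:: a]), 0; rewrite cats0 last_cat.
Qed.

Lemma tz_mk P m : last 0 P != 0 ->
  tzeros (P ++ nseq m 0) = m /\ tprefix (P ++ nseq m 0) = P.
Proof.
move=> HP.
have Ht : tzeros (P ++ nseq m 0) = m.
  rewrite /tzeros rev_cat rev_nseq find_cat has_nseq /= andbF size_nseq.
  case/lastP: P HP => [|P p] //=; rewrite last_rcons rev_rcons /= => ->.
  by rewrite addn0.
split => //; rewrite /tprefix Ht size_cat size_nseq addnK.
by rewrite take_size_cat.
Qed.

Lemma prec_mk I Q b : last 0 Q != 0 ->
  prec_seq I (Q ++ nseq b.+1 0) = Q ++ nseq b 0 ++ I.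
Proof. by move=> /(tz_mk b.+1) [H1 H2]; rewrite /prec_seq H1 H2. Qed.

Lemma succ_mk I Q b : last 0 Q != 0 ->
  succ_seq I (Q ++ nseq b.+1 0) = Q ++ I ++ nseq b 0.
Proof. by move=> /(tz_mk b.+1) [H1 H2]; rewrite /succ_seq H1 H2. Qed.

Lemma circ_mk I Q b : last 0 Q != 0 ->
  circ_seq I (Q ++ nseq b.+1 0) = tri Q I ++ nseq b 0.
Proof. by move=> /(tz_mk b.+1) [H1 H2]; rewrite /circ_seq H1 H2. Qed.

Lemma tri_rcons Q0 q P : tri (rcons Q0 q) P = Q0 ++ (q + head 0 P) :: behead P.
Proof.
by rewrite /tri size_rcons /= -cats1 take_size_cat // last_cat.
Qed.

Lemma tri_catr R Q Z : Q != [::] -> tri R (Q ++ Z) = tri R Q ++ Z.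
Proof. by case: Q => // q Q _; rewrite /tri /= -catA. Qed.

Lemma tri_catl X Q P : Q != [::] -> tri (X ++ Q) P = X ++ tri Q P.
Proof.
case/lastP: Q => // Q q _.
by rewrite -rcons_cat !tri_rcons catA.
Qed.

Lemma tri_assoc R Q P : R != [::] -> Q != [::] ->
  tri R (tri Q P) = tri (tri R Q) P.
Proof.
case/lastP: R => // R r _; case/lastP: Q => // Q q _.
rewrite !tri_rcons.
case: Q => [|q0 Q] /=.
  by rewrite cats1 tri_rcons addnA.
by rewrite -rcons_cons -rcons_cat tri_rcons -catA.
Qed.

Definition pcb s := (walk 1 s == Some 0) && (head 0 s != 0).

Lemma pcb_dec s : pcb s -> exists P m,
  [/\ s = P ++ nseq m.+1 0, last 0 P != 0, walk 1 P = Some m.+1 & head 0 P != 0].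
Proof.
case/andP => /eqP Hw Hh.
have : has (fun a => a != 0) s by case: s Hh {Hw} => //= a s ->.
case/decomp => P [m [Hs HP]].
have Pn : P != [::] by case: P HP Hs.
case: m Hs => [|m] Hs.
  case: (walk_last Hw) => [Hs0|]; first by rewrite Hs0 in Hh.
  by rewrite Hs cats0 => H; rewrite H in HP.
exists P, m; split => //.
  move: Hw; rewrite Hs walk_cat; case: (walk 1 P) => [k|] //=.
  rewrite walk_nseq0; case: ifP => // Hk; case: ifP => // Hm [] H0; congr Some; lia.
by move: Hh; rewrite Hs; case: P Pn {HP Hs} => [|p P'] //= _.
Qed.

Lemma pcb_mk P m : walk 1 P = Some m -> head 0 P != 0 -> pcb (P ++ nseq m 0).
Proof.
move=> Hw Hh; apply/andP; split.
  by rewrite walk_cat Hw /= walk_nseq0 leqnn subnn.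
by case: P Hw Hh => [|p P'] //=.
Qed.

Lemma walk1_cons a s : a != 0 -> walk 1 (a :: s) = walk a.+1 s.
Proof. by move=> /negbTE Ha /=; rewrite Ha add1n. Qed.

Lemma prec_pcb x y : pcb x -> pcb y -> pcb (prec_seq x y).
Proof.
case/pcb_dec=> P [a [-> _ HP hP]]; case/pcb_dec=> Q [b [-> lQ HQ hQ]].
rewrite prec_mk // !catA; apply: pcb_mk.
  by rewrite !walk_cat HQ /= walk_nseq0 leqnSn subSnn /= HP.
by case: Q lQ {HQ} hQ => [|q Q'] //=.
Qed.

Lemma succ_pcb x y : pcb x -> pcb y -> pcb (succ_seq x y).
Proof.
move=> Hx; case/pcb_dec=> Q [b [-> lQ HQ hQ]].
case/andP: Hx => /eqP Hx _.
rewrite succ_mk //=; apply/andP; split.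
  rewrite !walk_cat HQ /=.
  have := walk_shift b Hx; rewrite add1n add0n => Hs.
  by rewrite walk_cat Hs /= walk_nseq0 leqnn subnn.
by case: Q lQ {HQ} hQ => [|q Q'] //=.
Qed.

Lemma circ_pcb x y : pcb x -> pcb y -> pcb (circ_seq x y).
Proof.
move=> Hx; case/pcb_dec=> Q [b [-> lQ HQ hQ]].
case/andP: Hx; case: x => [|p X1] // /eqP Hx hp; rewrite /= in hp.
rewrite circ_mk //=.
case/lastP: Q lQ HQ hQ => [|Q0 q] //; rewrite last_rcons => lq HQ hQ.
rewrite tri_rcons /=.
move: HQ; rewrite -cats1 walk_cat; case E: (walk 1 Q0) => [k|] //=.
case: eqP => // k0; rewrite (negbTE lq) => -[Hk].
rewrite walk1_cons // in Hx; rewrite -catA /=.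
apply/andP; split.
  rewrite walk_cat E /=.
  have /negbTE -> : k != 0 by apply/eqP.
  have -> : (q + p == 0) = false by apply/negbTE; lia.
  rewrite walk_cat.
  have := walk_shift b Hx; rewrite add0n => Hs.
  have -> : k + (q + p) = p.+1 + b by lia.
  by rewrite Hs /= walk_nseq0 leqnn subnn.
case: Q0 E {hQ} (hQ) => //= *; lia.
Qed.

Inductive opk := Ol | Oc | Or.
Definition opseq A := match A with Ol => prec_seq | Oc => circ_seq | Or => succ_seq end.
Definition rel A B := match A, B with Ol, Ol => true | Ol, _ => false | _, _ => true end.

Lemma opseq_pcb A x y : pcb x -> pcb y -> pcb (opseq A x y).
Proof. by case: A; [exact: prec_pcb | exact: circ_pcb | exact: succ_pcb]. Qed.

Lemma last_cat_ne X Q : Q != [::] -> last 0 (X ++ Q) = last 0 Q.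
Proof. by case: Q => // q Q _; rewrite last_cat. Qed.

Lemma lnz_ne Q : last 0 Q != 0 -> Q != [::].
Proof. by case: Q. Qed.

Lemma lnz_cat X Q : last 0 Q != 0 -> last 0 (X ++ Q) != 0.
Proof. by move=> H; rewrite last_cat_ne // lnz_ne. Qed.

Lemma tri_ne R Q : tri R Q != [::].
Proof. by rewrite /tri; case: (take _ _). Qed.

Lemma lnz_tri R Q : last 0 R != 0 -> last 0 Q != 0 -> last 0 (tri R Q) != 0.
Proof.
case/lastP: R => [|R r] //; rewrite last_rcons => Hr.
case: Q => [|q Q] //= Hq; rewrite tri_rcons /= last_cat /=.
case: Q Hq => [|q' Q] //= Hq; lia.
Qed.

Lemma seq_rel A B x y z : pcb x -> pcb y -> pcb z -> rel A B ->
  opseq B (opseq A x y) z = opseq A x (opseq B y z).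
Proof.
case/pcb_dec=> P [a [Ex lP _ _]]; case/pcb_dec=> Q [b [Ey lQ _ _]].
case/pcb_dec=> R [c [Ez lR _ _]].
have nP := lnz_ne lP; have nQ := lnz_ne lQ; have nR := lnz_ne lR.
have cne X : X ++ Q != [::] by case: X.
have E1 : R ++ nseq c 0 ++ Q ++ nseq b.+1 0 = (R ++ nseq c 0 ++ Q) ++ nseq b.+1 0
  by rewrite !catA.
have E2 : R ++ (Q ++ nseq b.+1 0) ++ nseq c 0 = (R ++ Q) ++ nseq (b + c).+1 0
  by rewrite -addSn nseqD !catA.
have E3 : tri R Q ++ nseq b.+1 0 ++ nseq c 0 = tri R Q ++ nseq (b + c).+1 0
  by rewrite -nseqD addSn.
rewrite Ey Ez; case: A; case: B => // _; rewrite /opseq.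
- rewrite !prec_mk // E1 prec_mk ?lnz_cat //.
  by rewrite -!catA.
- rewrite !prec_mk // circ_mk // E1 circ_mk ?lnz_cat // (tri_catl R) ?cne // (tri_catl (nseq c 0)) //.
  by rewrite !catA.
- rewrite !circ_mk // (@tri_catr R _ _ (tri_ne Q x)) (@tri_catr R _ _ nQ) -[(tri R Q ++ _) ++ _]catA E3 circ_mk ?lnz_tri // tri_assoc // nseqD.
  by rewrite catA.
- rewrite !succ_mk // circ_mk // E2 circ_mk ?lnz_cat // tri_catl // nseqD.
  by rewrite !catA.
- rewrite !prec_mk // !succ_mk // E1 succ_mk ?lnz_cat //.
  by rewrite !catA.
- rewrite !circ_mk // succ_mk // !(@tri_catr R _ _ nQ) -[(tri R Q ++ nseq b.+1 0) ++ _]catA E3.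
  by rewrite succ_mk ?lnz_tri // nseqD !catA.
- rewrite !succ_mk // E2 succ_mk ?lnz_cat //.
  by rewrite nseqD !catA.
Qed.

Inductive term := X | Op of opk & term & term.

Fixpoint evs t := match t with X => [:: 1; 0; 0] | Op A t u => opseq A (evs t) (evs u) end.

Lemma evs_pcb t : pcb (evs t).
Proof. by elim: t => [|A t IHt u IHu] //=; apply: opseq_pcb. Qed.

Fixpoint ins A n m := match m with
  | X => Op A n X
  | Op B m1 m2 => if rel A B then ins B (ins A n m1) m2 else Op A n m end.

Lemma evs_ins A n m : evs (ins A n m) = opseq A (evs n) (evs m).
Proof.
elim: m A n => [|B m1 IH1 m2 IH2] A n //=.
case E: (rel A B) => //.
by rewrite IH2 IH1 seq_rel ?evs_pcb.
Qed.

Fixpoint nf t := match t with X => X | Op A t u => ins A (nf t) (nf u) end.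

Lemma evs_nf t : evs (nf t) = evs t.
Proof. by elim: t => [|A t IHt u IHu] //=; rewrite evs_ins IHt IHu. Qed.

Definition isOl A := if A is Ol then true else false.
Definition isX t := if t is X then true else false.

Fixpoint normal t := match t with
  | X => true
  | Op A n m => normal n && match m with
      | X => true
      | Op B m1 m2 => [&& isOl A, ~~ isOl B, isX m2 & normal m1] end end.

Lemma normal_sub A n m : normal (Op A n m) -> normal n /\ normal m.
Proof.
case/andP=> Hn Hm; split => //; case: m Hm => [|B m1 m2] //= /and4P[_ _].
by case: m2 => // _ H; apply/andP.
Qed.

Lemma ins_normal A n m : normal n -> normal m -> normal (ins A n m).
Proof.
elim: m A n => [|B m1 IH1 m2 IH2] A n Hn Hm /=; first by rewrite Hn.
have [H1 H2] := normal_sub Hm.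
case E: (rel A B); first by apply: IH2 => //; apply: IH1.
rewrite /= Hn /=.
case: A E => //; case: B Hm => // Hm _;
  case: m2 Hm {IH2 H2} => [|B' q r] /=; by rewrite ?H1 ?andbF.
Qed.

Lemma nf_normal t : normal (nf t).
Proof. by elim: t => [|A t IHt u IHu] //=; apply: ins_normal. Qed.

Fixpoint tsize t := match t with X => 1 | Op _ t u => (tsize t + tsize u).+1 end.

Fixpoint dec (fuel : nat) (s : seq nat) : term :=
  match fuel with 0 => X | f.+1 =>
  match s with [::] => X | h :: rest =>
   let p := spl h rest in
   if h == 1 then
     if p.1 == [:: 0] then (if p.2 == [:: 0] then X else Op Ol (dec f p.2) X)
     else if p.2 == [:: 0] then Op Or (dec f p.1) X
          else Op Ol (dec f p.2) (Op Or (dec f p.1) X)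
   else if p.2 == [:: 0] then Op Oc (dec f (h.-1 :: p.1)) X
        else Op Ol (dec f p.2) (Op Oc (dec f (h.-1 :: p.1)) X)
  end end.

Lemma pcb_ne0 s : pcb s -> (s == [:: 0]) = false.
Proof. by case/andP=> _; case: s => // a [|b s] //=; case: a. Qed.


Lemma prec_rcons I J0 : pcb (rcons J0 0) -> prec_seq I (rcons J0 0) = J0 ++ I.
Proof.
case/pcb_dec=> P [m [E lP _ _]].
have E' : rcons J0 0 = rcons (P ++ nseq m 0) 0 by rewrite E -cats1 -catA -addn1 nseqD.
move/rcons_inj: (E') => [->]; rewrite -E' E prec_mk //.
by rewrite catA.
Qed.

Lemma evs_lX t : evs (Op Ol t X) = [:: 1, 0 & evs t].
Proof. reflexivity. Qed.
Lemma evs_rX t : evs (Op Or t X) = 1 :: evs t ++ [:: 0].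
Proof. reflexivity. Qed.
Lemma evs_cX t : evs (Op Oc t X) = (1 + head 0 (evs t)) :: behead (evs t) ++ [:: 0].
Proof. reflexivity. Qed.

Lemma evs_lcX t q : evs (Op Ol t (Op Oc q X)) =
  (1 + head 0 (evs q)) :: behead (evs q) ++ evs t.
Proof.
have := evs_pcb (Op Oc q X); rewrite evs_cX -cat_cons cats1 => H.
change (evs (Op Ol t (Op Oc q X))) with (prec_seq (evs t) (evs (Op Oc q X))).
by rewrite evs_cX -cat_cons cats1 prec_rcons.
Qed.

Lemma evs_lrX t q : evs (Op Ol t (Op Or q X)) = 1 :: evs q ++ evs t.
Proof.
have := evs_pcb (Op Or q X); rewrite evs_rX -cat_cons cats1 => H.
change (evs (Op Ol t (Op Or q X))) with (prec_seq (evs t) (evs (Op Or q X))).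
by rewrite evs_rX -cat_cons cats1 prec_rcons.
Qed.

Lemma dec_cons f h rest A B : spl h rest = (A, B) ->
  dec f.+1 (h :: rest) =
   if h == 1 then
     if A == [:: 0] then (if B == [:: 0] then X else Op Ol (dec f B) X)
     else if B == [:: 0] then Op Or (dec f A) X
          else Op Ol (dec f B) (Op Or (dec f A) X)
   else if B == [:: 0] then Op Oc (dec f (h.-1 :: A)) X
        else Op Ol (dec f B) (Op Oc (dec f (h.-1 :: A)) X).
Proof. by move=> E; rewrite /= E. Qed.

Lemma pcb_walk s : pcb s -> walk 1 s = Some 0.
Proof. by case/andP=> /eqP. Qed.

Lemma dec_evs f n : normal n -> tsize n <= f -> dec f (evs n) = n.
Proof.
elim: f n => [|f IH] n; first by case: n.
case: n => [|A t m] Hn Hs; first reflexivity.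
have [Ht Hm] := normal_sub Hn.
have Tp := evs_pcb t.
have Tne := pcb_ne0 Tp.
rewrite /= in Hs.
case: m Hn Hm Hs => [|B q m2] Hn Hm Hs.
  case: A {Hn}.
  - rewrite evs_lX (@dec_cons f 1 _ [:: 0] (evs t)); last exact: (@spl_cat 1 [:: 0] (evs t) erefl).
    by rewrite /= Tne IH //; lia.
  - rewrite evs_cX; case E: (evs t) Tp Tne => [|a T] // Tp Tne.
    case/andP: (Tp) => /eqP Hw ha; have {}ha : a != 0 := ha.
    rewrite (@dec_cons f (1 + a) _ T [:: 0]); last first.
      by apply: spl_cat; rewrite walk1_cons // in Hw; rewrite add1n.
    have -> : (1 + a == 1) = false by apply/negbTE; lia.
    rewrite eqxx add1n /= -E IH //; lia.
  - rewrite evs_rX (@dec_cons f 1 _ (evs t) [:: 0]); last exact: spl_cat (pcb_walk Tp).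
    by rewrite /= Tne IH //; lia.
have Qp := evs_pcb q.
have Qne := pcb_ne0 Qp.
have [_ H4] := andP Hn; have [HA HB Hm2 Hq] := and4P H4.
case: A HA Hn H4 Hs => // _ Hn H4 Hs.
case: m2 Hm2 Hs {Hm H4 Hn} => // _ Hs.
case: B HB Hs => // _ Hs; rewrite /= in Hs.
- rewrite evs_lcX.
  case E: (evs q) Qp Qne => [|a Q] // Qp Qne.
  case/andP: (Qp) => /eqP Hw ha; have {}ha : a != 0 := ha.
  rewrite (@dec_cons f (1 + a) _ Q (evs t)); last first.
    by apply: spl_cat; rewrite walk1_cons // in Hw; rewrite add1n.
  have -> : (1 + a == 1) = false by apply/negbTE; lia.
  rewrite Tne add1n /= -E !IH //; lia.
- rewrite evs_lrX (@dec_cons f 1 _ (evs q) (evs t)); last exact: spl_cat (pcb_walk Qp).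
  by rewrite /= Tne Qne !IH //; lia.
Qed.

Lemma code_cases s : walk 1 s = Some 0 -> s = [:: 0] \/ pcb s.
Proof.
move=> H; case: (walk_code0 H) => [->|Hh]; first by left.
by right; rewrite /pcb H eqxx.
Qed.

Lemma evs_dec f s : pcb s -> size s <= f -> evs (dec f s) = s.
Proof.
elim: f s => [|f IH] s Hs Hsz; first by case: s Hs Hsz.
case: s Hs Hsz => [|h rest] // Hs Hsz.
case/andP: (Hs) => /eqP Hw Hh; have {}Hh : h != 0 := Hh.
rewrite walk1_cons // -addn1 in Hw.
move: (walk_split Hw); case E: (spl h rest) => [A B] [Er HA HB].
rewrite /= in Er HA HB.
rewrite (dec_cons _ E).
have Hsz' : size A + size B <= f by move: Hsz; rewrite Er /= size_cat.
case: (eqVneq h 1) => [Eh|Eh].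
  subst h.
  case: (code_cases HA) => [EA|pA]; case: (code_cases HB) => [EB|pB].
  - by rewrite Er EA EB eqxx.
  - rewrite EA eqxx (pcb_ne0 pB) evs_lX IH // ?Er ?EA //; lia.
  - rewrite EB eqxx (pcb_ne0 pA) evs_rX IH // ?Er ?EB //; lia.
  - rewrite (pcb_ne0 pA) (pcb_ne0 pB) evs_lrX !IH // ?Er //; lia.

have pN : pcb (h.-1 :: A).
  apply/andP; split => /=; last by lia.
  have -> : (h.-1 == 0) = false by apply/negbTE; lia.
  by rewrite add1n prednK ?HA //; lia.
have Eh1 : 1 + h.-1 = h by lia.
case: (code_cases HB) => [EB|pB].
  rewrite EB /= in Hsz'; rewrite EB eqxx evs_cX IH //= ?Eh1 ?Er ?EB //; lia.
have szB : 0 < size B by case: (B) pB.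
rewrite (pcb_ne0 pB) evs_lcX !IH //= ?Eh1 ?Er //; lia.
Qed.

Fixpoint allP (P : ptree -> Prop) (ts : seq ptree) : Prop :=
  match ts with [::] => True | t :: ts' => P t /\ allP P ts' end.

Definition ptree_ind2 (P : ptree -> Prop) (HL : P Leaf)
  (HN : forall ts, allP P ts -> P (Node ts)) : forall t, P t :=
  fix F t := match t with
  | Leaf => HL
  | Node ts => HN ts ((fix G ts := match ts return allP P ts with
                        | [::] => I
                        | t :: ts' => conj (F t) (G ts') end) ts)
  end.

Lemma walk_polish t : reduced t -> forall k s, walk k.+1 (polish t ++ s) = walk k s.
Proof.
elim/ptree_ind2: t => [|ts IH] //= /andP[Hsz Hr] k s.
have Hf : forall k, walk (k + size ts) (flatten (map polish ts) ++ s) = walk k s.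
  elim: ts IH Hr {Hsz} => [|t ts IHts] /=.
    by move=> _ _ k'; rewrite addn0.
  by case=> IHt IH /andP[rt rts] k'; rewrite -catA addnS IHt // IHts.
have -> : ((size ts).-1 == 0) = false by case: (size ts) Hsz => [|[|m]].
by rewrite -Hf addSnnS prednK // ltnW.
Qed.

Lemma nleaves_pos t : reduced t -> 0 < nleaves t.
Proof.
elim/ptree_ind2: t => [|ts IH] //= /andP[Hsz Hr].
case: ts IH Hr Hsz => [|t ts] //= [IHt _] /andP[rt _] _.
by rewrite (leq_trans (IHt rt)) // leq_addr.
Qed.

Lemma walk_forest n s : walk n s = Some 0 ->
  exists ts, [/\ size ts = n, all reduced ts & flatten (map polish ts) = s].
Proof.
have [N] := ubnP (size s); elim: N s n => // N IH s n Hs.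
case: s Hs => [|a s] Hs.
  by case=> ->; exists [::].
case: n => [|n] // Hw.
have Hw' : walk (1 + n) (a :: s) = Some 0 by [].
case: (walk_split Hw'); set s1 := (spl 1 _).1; set s2 := (spl 1 _).2 => E H1 H2.
case: s1 E H1 {H2} (H2) => [|b s1'] // E H1 H2.
have Hsz2 : size s2 < N.
  by move: Hs; rewrite E /= size_cat; lia.
have [ts2 [Sz2 R2 F2]] := IH s2 n Hsz2 H2.
have Hsz1 : size s1' < N by move: Hs; rewrite E /= size_cat; lia.
have [t [Rt Pt]] : exists t, reduced t /\ polish t = b :: s1'.
  case: (eqVneq b 0) H1 => [-> /= H1|Hb H1].
    by case: s1' H1 {E Hsz1} => // _; exists Leaf.
  rewrite walk1_cons // in H1.
  have [ts1 [Sz1 R1 F1]] := IH s1' _ Hsz1 H1.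
  exists (Node ts1); rewrite /= Sz1 R1 F1 andbT; split => //; lia.
exists (t :: ts2); rewrite /= Sz2 Rt R2 Pt F2; split => //.
Qed.

Lemma is_pcE s : is_pc s = pcb s.
Proof.
apply/asboolP/idP => [[t [Rt [Nt <-]]]|Hs].
  apply/andP; split.
    by rewrite -[polish t]cats0 (walk_polish Rt 0).
  case: t Rt Nt => //= ts /andP[Hsz _] _; lia.
case/andP: (Hs) => /eqP /walk_forest [[|t [|t' ts]] [//= _ /andP[Rt _]]].
rewrite cats0 => Et.
exists t; split => //; split => //.
case: t Rt Et => [|ts] /=; first by move=> _ Et; rewrite -Et in Hs.
case/andP=> Hsz Hr _.
case: ts Hsz Hr => [|t1 [|t2 ts]] //= _ /and3P[r1 r2 _].
have := nleaves_pos r1; have := nleaves_pos r2; lia.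
Qed.

Import GRing.Theory.
Local Open Scope ring_scope.

Section Lin.
Variable W : lmodType CC.

Definition L (F : PC -> W) (v : V) : W := \sum_(k <- msupp v) v@_k *: F k.

Lemma L_incl F (v : V) (D : {fset PC}) : (msupp v `<=` D)%fset ->
  L F v = \sum_(k <- D) v@_k *: F k.
Proof.
move=> H; rewrite /L (big_fset_incl _ H) // => k _ /mcoeff_outdom ->.
by rewrite scale0r.
Qed.

Lemma L_lin F a (u v : V) : L F (a *: u + v) = a *: L F u + L F v.
Proof.
set D := (msupp u `|` msupp v)%fset.
have Hu : (msupp u `<=` D)%fset by apply: fsubsetUl.
have Hv : (msupp v `<=` D)%fset by apply: fsubsetUr.
have Huv : (msupp (a *: u + v) `<=` D)%fset.
  apply: fsubset_trans (msuppD_le _ _) _.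
  by apply: fsetUSS => //; apply: msuppZ_le.
rewrite (L_incl F Huv) (L_incl F Hu) (L_incl F Hv) scaler_sumr -big_split /=.
apply: eq_bigr => k _; rewrite mcoeffD mcoeffZ scalerDl scalerA //.
Qed.

Lemma L_linF F G a (v : V) : L (fun k => a *: F k + G k) v = a *: L F v + L G v.
Proof.
rewrite /L scaler_sumr -big_split /=; apply: eq_bigr => k _.
by rewrite scalerDr !scalerA mulrC.
Qed.

Lemma L_U F k : L F << k >> = F k.
Proof. by rewrite /L msuppU oner_eq0 big_seq_fset1 mcoeffUU scale1r. Qed.

Lemma L_ext F G (v : V) : (forall k, F k = G k) -> L F v = L G v.
Proof. by move=> H; rewrite /L; apply: eq_bigr => k _; rewrite H. Qed.

End Lin.

Section Lin2.
Variable W : lmodType CC.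
Definition islin (h : V -> W) := forall a u v, h (a *: u + v) = a *: h u + h v.

Lemma islin0 h : islin h -> h 0 = 0.
Proof.
move=> H; have E := H 1 0 0; rewrite !scale1r addr0 in E.
by apply: (addrI (h 0)); rewrite addr0 -E.
Qed.

Lemma lin_sum h (I : Type) (s : seq I) (c : I -> CC) (F : I -> V) : islin h ->
  h (\sum_(i <- s) c i *: F i) = \sum_(i <- s) c i *: h (F i).
Proof.
move=> H; elim: s => [|i s IH]; first by rewrite !big_nil islin0.
by rewrite !big_cons H IH.
Qed.

Lemma lin_L h F v : islin h -> h (L (W:=V) F v) = L (h \o F) v.
Proof. by move=> H; rewrite /L lin_sum. Qed.

Lemma malgUZ (c : CC) (k : PC) : << c *g k >> = c *: (<< k >> : V).
Proof.
apply/malgP => k'; rewrite mcoeffZ !mcoeffU.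
by rewrite mulr_natr.
Qed.

Lemma V_decomp (v : V) : v = L (W:=V) (fun k => << k >>) v.
Proof.
rewrite {1}(monalgE v) /L; apply: eq_bigr => k _; exact: malgUZ.
Qed.

Lemma lin_ext h1 h2 : islin h1 -> islin h2 -> (forall k, h1 << k >> = h2 << k >>) ->
  forall v, h1 v = h2 v.
Proof.
move=> H1 H2 E v; rewrite (V_decomp v) !lin_L //; exact: L_ext.
Qed.
End Lin2.

Definition opW (W : lmodType CC) (l c r : W -> W -> W) (A : opk) :=
  match A with Ol => l | Oc => c | Or => r end.

Lemma tri_rel (W : lmodType CC) (l c r : W -> W -> W) : triduplicial l c r ->
  forall A B, rel A B -> forall x y z,
  opW l c r B (opW l c r A x y) z = opW l c r A x (opW l c r B y z).
Proof.
move=> [_ [_ [_ [Hll [Hcc [Hrr [Hrl [Hcl [Hrc Hcr]]]]]]]]].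
by case; case.
Qed.

Lemma tri_bil (W : lmodType CC) (l c r : W -> W -> W) : triduplicial l c r ->
  forall A, bilinear_op (opW l c r A).
Proof. by move=> [Hl [Hc [Hr _]]]; case. Qed.

Lemma tri_intro (W : lmodType CC) (l c r : W -> W -> W) :
  (forall A, bilinear_op (opW l c r A)) ->
  (forall A B, rel A B -> forall x y z,
     opW l c r B (opW l c r A x y) z = opW l c r A x (opW l c r B y z)) ->
  triduplicial l c r.
Proof.
move=> Hb Hr.
split; first exact: (Hb Ol). split; first exact: (Hb Oc). split; first exact: (Hb Or).
split; first exact: (Hr Ol Ol erefl).
split; first exact: (Hr Oc Oc erefl).
split; first exact: (Hr Or Or erefl).
split; first exact: (Hr Or Ol erefl).
split; first exact: (Hr Oc Ol erefl).
split; first exact: (Hr Or Oc erefl).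
exact: (Hr Oc Or erefl).
Qed.

Definition opV (A : opk) : V -> V -> V := bilin_ext (opseq A).

Lemma opVE A : opW Vprec Vcirc Vsucc A = opV A.
Proof. by case: A. Qed.

Lemma bilinE op (f g : V) :
  bilin_ext op f g = L (fun i => L (fun j => bvec (op (val i) (val j))) g) f.
Proof.
rewrite /bilin_ext /L; apply: eq_bigr => i _; rewrite scaler_sumr.
by apply: eq_bigr => j _; rewrite scalerA.
Qed.

Lemma bilin_bil op : bilinear_op (bilin_ext op).
Proof.
split => a x y z.
  by rewrite !bilinE L_lin.
rewrite !bilinE.
transitivity (L (fun i => a *: L (fun j => bvec (op (val i) (val j))) y +
                          L (fun j => bvec (op (val i) (val j))) z) x).
  by apply: L_ext => i; exact: L_lin.
exact: L_linF.
Qed.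

Lemma bvecE (k : PC) : bvec (val k) = << k >>.
Proof. by rewrite /bvec valK. Qed.

Lemma valpcb (k : PC) : pcb (val k).
Proof. by rewrite -is_pcE; exact: (valP k). Qed.

Lemma pc_ex s : pcb s -> exists k : PC, val k = s.
Proof.
move=> H; have H' : is_pc s by rewrite is_pcE.
by exists (exist _ s H').
Qed.

Lemma bilin_bvec op s1 s2 : pcb s1 -> pcb s2 ->
  bilin_ext op (bvec s1) (bvec s2) = bvec (op s1 s2).
Proof.
move=> /pc_ex [k1 <-] /pc_ex [k2 <-].
by rewrite !bvecE bilinE !L_U.
Qed.

Lemma islin_l (W : lmodType CC) (op : W -> W -> W) (h : V -> W) y :
  bilinear_op op -> islin h -> islin (fun x => op (h x) y).
Proof. by move=> [H _] Hh a u v /=; rewrite Hh H. Qed.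

Lemma islin_r (W : lmodType CC) (op : W -> W -> W) (h : V -> W) x :
  bilinear_op op -> islin h -> islin (fun y => op x (h y)).
Proof. by move=> [_ H] Hh a u v /=; rewrite Hh H. Qed.

Lemma islin_id : islin (fun v : V => v).
Proof. by []. Qed.

Lemma V_tri : triduplicial Vprec Vcirc Vsucc.
Proof.
apply: tri_intro => [A|A B HAB x y z]; rewrite ?opVE; first exact: bilin_bil.
have bil := bilin_bil.
have E : forall i j k : PC,
  opV B (opV A << i >> << j >>) << k >> = opV A << i >> (opV B << j >> << k >>).
  move=> i j k; rewrite /opV -!bvecE !bilin_bvec ?valpcb ?opseq_pcb ?valpcb //.
  by rewrite seq_rel ?valpcb.
have Li (op : V -> V -> V) (b : bilinear_op op) q : islin (fun v => op v q).
  exact: (islin_l q b islin_id).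
have Ri (op : V -> V -> V) (b : bilinear_op op) q : islin (fun v => op q v).
  exact: (islin_r q b islin_id).
have bA := bil (opseq A); have bB := bil (opseq B).
move: x; apply: lin_ext => [||i].
- exact: (islin_l z bB (Li _ bA y)).
- exact: (Li _ bA _).
move: y; apply: lin_ext => [||j].
- exact: (islin_l z bB (Ri _ bA << i >>)).
- exact: (islin_r << i >> bA (Li _ bB z)).
move: z; apply: lin_ext => [||k].
- exact: (Ri _ bB _).
- exact: (islin_r << i >> bA (Ri _ bB << j >>)).
exact: E.
Qed.

Section Free.
Variables (W : lmodType CC) (l c r : W -> W -> W).
Hypothesis Htri : triduplicial l c r.
Variable w : W.

Fixpoint evW (t : term) : W :=
  match t with X => w | Op A t u => opW l c r A (evW t) (evW u) end.

Lemma evW_ins A n m : evW (ins A n m) = opW l c r A (evW n) (evW m).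
Proof.
elim: m A n => [|B m1 IH1 m2 IH2] A n //=.
case E: (rel A B) => //.
by rewrite IH2 IH1 (tri_rel Htri).
Qed.

Lemma evW_nf t : evW (nf t) = evW t.
Proof. by elim: t => [|A t IHt u IHu] //=; rewrite evW_ins IHt IHu. Qed.

Lemma evW_eq t1 t2 : evs t1 = evs t2 -> evW t1 = evW t2.
Proof.
move=> E; rewrite -evW_nf -(evW_nf t2).
set F := (tsize (nf t1) + tsize (nf t2))%N.
rewrite -(@dec_evs F (nf t1)) ?nf_normal ?leq_addr //.
rewrite -(@dec_evs F (nf t2)) ?nf_normal ?leq_addl //.
by rewrite !evs_nf E.
Qed.

Definition fW : V -> W := L (fun k => evW (dec (size (val k)) (val k))).

Lemma fW_lin : islin fW.
Proof. by move=> a u v; rewrite /fW L_lin. Qed.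

Lemma fW_bvec s : pcb s -> fW (bvec s) = evW (dec (size s) s).
Proof. by case/pc_ex=> k <-; rewrite bvecE /fW L_U. Qed.

Lemma fW_morph A u v : fW (opV A u v) = opW l c r A (fW u) (fW v).
Proof.
have bA := bilin_bil (opseq A).
have bW := tri_bil Htri A.
move: u; apply: lin_ext => [a x y|a x y|i] /=.
- by rewrite /opV (proj1 bA) fW_lin.
- by rewrite fW_lin (proj1 bW).
move: v; apply: lin_ext => [a x y|a x y|j] /=.
- by rewrite /opV (proj2 bA) fW_lin.
- by rewrite fW_lin (proj2 bW).
rewrite /opV -!bvecE bilin_bvec ?valpcb // fW_bvec ?opseq_pcb ?valpcb //.
rewrite !fW_bvec ?valpcb //.
have -> : opW l c r A (evW (dec (size (val i)) (val i))) (evW (dec (size (val j)) (val j)))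
  = evW (Op A (dec (size (val i)) (val i)) (dec (size (val j)) (val j))) by [].
apply: evW_eq => /=.
by rewrite !evs_dec ?opseq_pcb ?valpcb.
Qed.

End Free.

Theorem mainTheorem4 :
  triduplicial Vprec Vcirc Vsucc /\
  forall (W : lmodType CC) (l c r : W -> W -> W),
    triduplicial l c r ->
    forall w : W,
      exists f : V -> W,
        [/\ tri_morph Vprec Vcirc Vsucc l c r f, f xgen = w &
            forall g : V -> W, tri_morph Vprec Vcirc Vsucc l c r g ->
              g xgen = w -> forall v, g v = f v].
Proof.
split; first exact: V_tri.
move=> W l c r Ht w.
exists (fW l c r w); split.
- split.
  + exact: fW_lin.
  + by move=> u v; have := fW_morph Ht w Ol u v; rewrite /opV /Vprec /=.
  + by move=> u v; have := fW_morph Ht w Oc u v; rewrite /opV /Vcirc /=.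
  + by move=> u v; have := fW_morph Ht w Or u v; rewrite /opV /Vsucc /=.
- by rewrite /xgen fW_bvec.
move=> g [Hg1 Hg2 Hg3 Hg4] Hgx v.
have Hgop A x y : g (opV A x y) = opW l c r A (g x) (g y).
  by case: A; [exact: Hg2 | exact: Hg3 | exact: Hg4].
have Hgt t : g (bvec (evs t)) = evW l c r w t.
  elim: t => [|A t IHt u IHu]; first exact: Hgx.
  change (evs (Op A t u)) with (opseq A (evs t) (evs u)).
  rewrite -(bilin_bvec (opseq A) (evs_pcb t) (evs_pcb u)).
  change (bilin_ext (opseq A) (bvec (evs t)) (bvec (evs u))) with
    (opV A (bvec (evs t)) (bvec (evs u))).
  by rewrite Hgop IHt IHu.
apply: (lin_ext (h1 := g)) => // [|k]; first exact: fW_lin.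
rewrite -bvecE fW_bvec ?valpcb //.
by rewrite -{1}(@evs_dec (size (val k)) (val k)) ?valpcb // Hgt.
Qed.
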